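(* Let $\mathcal C$ be an $\mathbb F_{q^n}$-linear rank metric code of dimension $k>2$ contained in $\mathcal L_{n,q}$, with $\mathcal C\cap\mathcal U_1=\{0\}$. Suppose there exists an integer $s$ with $\gcd(s,n)=1$ such that: (1) $\dim(\mathcal C\cap\mathcal C^{[s]})=k-2$ and $\dim(\mathcal C\cap\mathcal C^{[s]}\cap\mathcal C^{[2s]})=k-3$; that is, there exist $p(x),q(x)\in\mathcal L_{n,q}$, with $q(x)\in\mathcal C$, such that \[\mathcal C=\langle p(x)^{[s]},p(x)^{[2s]},\ldots,p(x)^{[s(k-1)]}\rangle_{\mathbb F_{q^n}}\oplus\langle q(x)\rangle_{\mathbb F_{q^n}};\] (2) $p(x)$ is invertible and there exists $\eta\in\mathbb F_{q^n}^*$ such that $p(x)+\eta\,p(x)^{[sk]}\in\mathcal C$ and $\mathrm N_{q^n/q}(\eta)\neq(-1)^{kn}$. Then $\mathcal C$ is an MRD code equivalent to $\mathcal H_{k,s}(\eta)$.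
   Context: $q$ is a prime power, $[i]:=q^i$. $\mathcal L_{n,q}$ is the $\mathbb F_{q^n}$-vector space of linearized polynomials $f(x)=\sum_{i=0}^{n-1}a_ix^{[i]}$, $a_i\in\mathbb F_{q^n}$, identified with $\mathbb F_q$-linear maps of $\mathbb F_{q^n}$ (rank = $\mathbb F_q$-dimension of the image). $\mathcal U_1$ is the set of elements of rank at most one. For $f(x)=\sum_i a_ix^{[i]}$, $f(x)^{[j]}:=x^{[j]}\circ f(x)=\sum_i a_i^{[j]}x^{[(i+j)\bmod n]}$, and $\mathcal C^{[j]}=\{f^{[j]}\colon f\in\mathcal C\}$. A code (an $\mathbb F_q$-subspace of $\mathcal L_{n,q}$ with rank distance $\mathrm{rk}(f-g)$, minimum distance $d$) is MRD if $|\mathcal C|=q^{n(n-d+1)}$. $\mathrm N_{q^n/q}(\eta)=\prod_{i=0}^{n-1}\eta^{[i]}$. $\mathcal H_{k,s}(\eta)=\langle x+\eta x^{[sk]},x^{[s]},\ldots,x^{[s(k-1)]}\rangle_{\mathbb F_{q^n}}$. Codes $\mathcal C,\mathcal C'$ are equivalent if there are invertible $h,g\in\mathcal L_{n,q}$ and a field automorphism $\sigma$ (acting on coefficients) with $\{h\circ f^\sigma\circ g\colon f\in\mathcal C\}=\mathcal C'$. *)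

(* Defs.v *)
From HB Require Import structures.
From mathcomp Require Import all_boot all_order all_algebra.
From mathcomp Require Import falgebra fieldext.
Set Implicit Arguments. Unset Strict Implicit. Unset Printing Implicit Defensive.
Import GRing.Theory.
Local Open Scope ring_scope.

(* Setting: F = F_q (a finite field, q := #|F|), L = F_{q^n} given as a
   field extension of F of dimension n (\dim {:L} = n, imposed in the theorem).
   An element of L_{n,q} is its coefficient vector (a_0, ..., a_{n-1}) : 'rV[L]_n,
   so L_{n,q} is the L-vector space 'rV[L]_n and an F_{q^n}-linear code is a
   {vspace 'rV[L]_n}. *)

Section LinPoly.
Variables (F : finFieldType) (L : fieldExtType F) (n : nat).

Definition qq : nat := #|F|.

Definition lpeval (a : 'rV[L]_n) (x : L) : L :=
  \sum_(i < n) a 0 i * x ^+ (qq ^ i).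

(* rank of f = F_q-dimension of its image (f is F_q-linear, so linfun f = f) *)
Definition lprank (a : 'rV[L]_n) : nat := \dim (limg (linfun (lpeval a))).

(* f(x)^[j] = sum_i a_i^[j] x^[(i+j) mod n] *)
Definition lpfrob (j : nat) (a : 'rV[L]_n) : 'rV[L]_n :=
  \row_(m < n) \sum_(i < n | ((i + j) %% n == m)%N) (a 0 i) ^+ (qq ^ j).

(* C^[j] = { f^[j] : f in C }; since f |-> f^[j] is additive and
   sigma-semilinear (sigma = Frobenius^j, bijective on L), this set is the
   L-span of the images of a basis of C. *)
Definition codefrob (j : nat) (C : {vspace 'rV[L]_n}) : {vspace 'rV[L]_n} :=
  <<[seq lpfrob j f | f <- vbasis C]>>%VS.

Definition lpx : 'rV[L]_n := \row_(i < n) ((i : nat) == 0%N)%:R.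
Definition lpX (j : nat) : 'rV[L]_n := lpfrob j lpx.

Definition meets_U1_trivially (C : {vspace 'rV[L]_n}) : Prop :=
  forall f, f \in C -> (lprank f <= 1)%N -> f = 0.

Definition lp_invertible (a : 'rV[L]_n) : Prop := bijective (lpeval a).

Definition is_min_dist (C : {vspace 'rV[L]_n}) (d : nat) : Prop :=
  (exists f g, [/\ f \in C, g \in C, f != g & lprank (f - g) = d]) /\
  (forall f g, f \in C -> g \in C -> f != g -> (d <= lprank (f - g))%N).

(* MRD: |C| = q^{n(n-d+1)}; an L-subspace of dimension dim C has
   |C| = (q^n)^(dim C) elements. *)
Definition MRD (C : {vspace 'rV[L]_n}) : Prop :=
  exists d, is_min_dist C d /\
    ((qq ^ n) ^ (\dim C) = qq ^ (n * (n - d + 1)))%N.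

Definition normL (eta : L) : L := \prod_(i < n) eta ^+ (qq ^ i).

Definition Hcode (k s : nat) (eta : L) : {vspace 'rV[L]_n} :=
  <<(lpx + eta *: lpX (s * k))%R :: [seq lpX (s * i) | i <- iota 1 k.-1]>>%VS.

(* equivalence: {h o f^sigma o g : f in C} = C' with h, g invertible and
   sigma a field automorphism of L acting on coefficients; elements of L_{n,q}
   are compared as maps of L (the stated identification). *)
Definition code_equiv (C C' : {vspace 'rV[L]_n}) : Prop :=
  exists (h g : 'rV[L]_n) (sigma : {rmorphism L -> L}),
    [/\ lp_invertible h, lp_invertible g, bijective sigma,
        (forall f, f \in C -> exists2 f', f' \in C' &
            lpeval f' =1 (lpeval h \o lpeval (map_mx sigma f) \o lpeval g))
      & (forall f', f' \in C' -> exists2 f, f \in C &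
            lpeval f' =1 (lpeval h \o lpeval (map_mx sigma f) \o lpeval g))].

End LinPoly.

(* Main.v *)
Require Import Defs.
From HB Require Import structures.
From mathcomp Require Import all_boot all_order all_algebra.
From mathcomp Require Import falgebra fieldext finfield ring zify.
Set Implicit Arguments. Unset Strict Implicit. Unset Printing Implicit Defensive.
Import GRing.Theory.
Local Open Scope ring_scope.

Section Basics.
Variables (F : finFieldType) (L : fieldExtType F).

Definition fr (t : nat) (x : L) : L := x ^+ (#|F| ^ t).

Lemma fr1A (x y : L) : fr 1 (x + y) = fr 1 x + fr 1 y.
Proof.
rewrite /fr expn1.
have [p _ pcharFp] := finPcharP F; rewrite (card_pprimeChar pcharFp).
elim: (logn _ _) => [|m IHm]; first by rewrite expn0 !expr1.
rewrite expnSr !exprM {}IHm.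
rewrite -(pchar_lalg L) in pcharFp.
by rewrite -!(pFrobenius_autE pcharFp) rmorphD.
Qed.

Lemma frS t x : fr t.+1 x = fr 1 (fr t x).
Proof. by rewrite /fr expnSr exprM expn1. Qed.

Lemma frD a b x : fr (a + b) x = fr a (fr b x).
Proof. by rewrite /fr expnD mulnC exprM. Qed.

Lemma fr0 x : fr 0 x = x.
Proof. by rewrite /fr expn0 expr1. Qed.

Lemma frA t (x y : L) : fr t (x + y) = fr t x + fr t y.
Proof. elim: t => [|t IH]; first by rewrite !fr0. by rewrite !(frS t) IH fr1A. Qed.

Lemma frM t (x y : L) : fr t (x * y) = fr t x * fr t y.
Proof. by rewrite /fr exprMn. Qed.

Lemma frz t : fr t (0 : L) = 0.
Proof. by rewrite /fr expr0n expn_eq0; case: #|F| (finNzRing_gt1 F). Qed.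

Lemma fr1 t : fr t (1 : L) = 1.
Proof. by rewrite /fr expr1n. Qed.

Lemma frN t (x : L) : fr t (- x) = - fr t x.
Proof. by apply/eqP; rewrite -subr_eq0 opprK -frA addNr frz. Qed.

Lemma frB t (x y : L) : fr t (x - y) = fr t x - fr t y.
Proof. by rewrite frA frN. Qed.

Lemma frsum t I (r : seq I) (P : pred I) (G : I -> L) :
  fr t (\sum_(i <- r | P i) G i) = \sum_(i <- r | P i) fr t (G i).
Proof. by elim/big_rec2: _ => [|i a b _ <-]; rewrite ?frz ?frA. Qed.

Lemma frprod t I (r : seq I) (P : pred I) (G : I -> L) :
  fr t (\prod_(i <- r | P i) G i) = \prod_(i <- r | P i) fr t (G i).
Proof. by elim/big_rec2: _ => [|i a b _ <-]; rewrite ?fr1 ?frM. Qed.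

Lemma frV t (x : L) : fr t (x^-1) = (fr t x)^-1.
Proof. by rewrite /fr exprVn. Qed.

Lemma fr_eq0 t (x : L) : (fr t x == 0) = (x == 0).
Proof. by rewrite /fr expf_eq0 expn_gt0 ltnW ?finNzRing_gt1. Qed.

Lemma frC t (c : F) : fr t (c%:A : L) = c%:A.
Proof.
elim: t => [|t IH]; first by rewrite fr0.
rewrite frS IH /fr expn1 -in_algE -rmorphXn /=.
by rewrite expf_card.
Qed.

Lemma frZ t (c : F) (x : L) : fr t (c *: x) = c *: fr t x.
Proof. by rewrite -mulr_algl frM frC mulr_algl. Qed.

Lemma fr_fix1 (x : L) : fr 1 x = x -> exists c : F, x = c%:A.
Proof.
move=> h; have : x \in (1%AS : {subfield L}).
  by rewrite Fermat's_little_theorem dimv1 -[_ ^+ (_ ^ 1)]/(fr 1 x) h.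
by case/vlineP=> c ->; exists c.
Qed.

Lemma fr_period (n : nat) (hn : \dim {:L} = n) (x : L) : fr n x = x.
Proof.
have := Fermat's_little_theorem {:L}%AS x.
by rewrite memvf /= hn => /esym/eqP.
Qed.

Lemma fr_mod (n : nat) (hn : \dim {:L} = n) t (x : L) : fr t x = fr (t %% n)%N x.
Proof.
rewrite {1}(divn_eq t n) addnC frD; congr (fr _ _).
elim: (t %/ n)%N => [|m IH]; first by rewrite mul0n fr0.
by rewrite mulSn frD IH fr_period.
Qed.

End Basics.

Section Lin.
Variables (F : finFieldType) (L : fieldExtType F).

Definition flin (G : L -> L) :=
  (forall x y, G (x + y) = G x + G y) /\ (forall (c : F) x, G (c *: x) = c *: G x).

Lemma mklinE (G : L -> L) : flin G -> linfun G =1 G.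
Proof.
case=> hA hZ.
have hG : linear G by move=> a x y; rewrite hA hZ.
pose g : {linear L -> L} := HB.pack G (GRing.isLinear.Build F L L *:%R G hG).
exact: (lfunE g).
Qed.

Lemma mklin_ker (G : L -> L) : flin G -> forall x, (x \in lker (linfun G)) = (G x == 0).
Proof. by move=> hG x; rewrite memv_ker mklinE. Qed.

Definition kd (G : L -> L) := \dim (lker (linfun G)).

Lemma kd_comp (G H K : L -> L) : flin G -> flin H -> flin K -> K =1 G \o H ->
  (kd K <= kd G + kd H)%N.
Proof.
move=> lG lH lK eK; rewrite /kd.
have := limg_ker_dim (linfun H) (lker (linfun K)).
move=> <-; rewrite addnC leq_add //.
  apply: dimvS; apply/subvP => y /memv_imgP [x hx ->].
  by rewrite mklin_ker // mklinE //; move: hx; rewrite mklin_ker // eK.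
by apply: dimvS; apply: capvSr.
Qed.

Lemma kd_ext (G H : L -> L) : flin G -> flin H -> G =1 H -> kd G = kd H.
Proof.
move=> lG lH e; rewrite /kd; congr (\dim _); apply/vspaceP => x.
by rewrite !mklin_ker // e.
Qed.

End Lin.

Section SPol.
Variables (F : finFieldType) (L : fieldExtType F) (n : nat).
Hypothesis hn : \dim {:L} = n.
Hypothesis n1 : (1 < n)%N.
Variable s : nat.
Hypothesis hs : coprime s n.

Local Notation fr := (@fr F L).

Lemma fix_sig (y : L) : fr s y = y -> exists c : F, y = c%:A.
Proof.
move=> hy; apply: fr_fix1.
have s0 : (0 < s)%N.
  case: s hs => // /eqP; rewrite gcd0n => en; move: n1; rewrite en.
  by [].
have [km kn e _] := egcdnP n s0.
have hsa : forall a, fr (s * a) y = y.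
  elim=> [|a IH]; first by rewrite muln0 fr0.
  by rewrite mulnS frD IH hy.
move: (hsa km); rewrite mulnC e (eqP hs) addn1 frS.
rewrite mulnC.
have -> : forall b, fr (n * b) y = y.
  elim=> [|b IH]; first by rewrite muln0 fr0.
  by rewrite mulnS frD IH (fr_period hn).
by [].
Qed.

Definition spol (c : nat -> L) (m : nat) (x : L) : L :=
  \sum_(i < m.+1) c i * fr (s * i) x.

Lemma spol_lin c m : flin (spol c m).
Proof.
split=> [x y|a x]; rewrite /spol.
  by rewrite -big_split; apply: eq_bigr => i _; rewrite frA mulrDr.
rewrite scaler_sumr; apply: eq_bigr => i _.
by rewrite frZ scalerAr.
Qed.

Lemma hlin (b : L) : flin (fun x => fr s x - b * x).
Proof.
split=> [x y|a x]; first by rewrite frA mulrDr; ring.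
by rewrite frZ scalerBr scalerAr.
Qed.

Lemma spol0 c m : spol c m 0 = 0.
Proof. by rewrite /spol big1 // => i _; rewrite frz mulr0. Qed.

Lemma div1 (b : L) m (c : nat -> L) : exists d : nat -> L, exists r : L,
  (forall x, spol c m.+1 x = spol d m (fr s x - b * x) + r * x) /\
  d m = c m.+1 /\ c 0%N = r - b * d 0%N.
Proof.
elim: m c => [|m IH] c.
  exists (fun _ => c 1%N), (c 0%N + c 1%N * b); split=> [x|]; last by split=> //; ring.
  rewrite /spol !big_ord_recr !big_ord0 /= !add0r muln0 muln1 !fr0; ring.
pose c' := fun i => if i == m.+1 then c m.+1 + c m.+2 * fr (s * m.+1) b else c i.
have [d' [r' [e1 [e2 e3]]]] := IH c'.
exists (fun i => if i == m.+1 then c m.+2 else d' i), r'.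
split; last by rewrite eqxx; split=> //; rewrite -e3.
move=> x.
have -> : spol c m.+2 x = spol c' m.+1 x + c m.+2 * fr (s * m.+1) (fr s x - b * x).
  rewrite /spol big_ord_recr [in RHS]big_ord_recr /= big_ord_recr /=.
  rewrite /c' eqxx.
  have -> : \sum_(i < m.+1) c i * fr (s * i) x =
     \sum_(i < m.+1) (if (i : nat) == m.+1 then c m.+1 + c m.+2 * fr (s * m.+1) b else c i) * fr (s * i) x.
    by apply: eq_bigr => i _; rewrite ltn_eqF.
  rewrite frB frM -frD addnC -mulnS; ring.
rewrite e1 /spol [in RHS]big_ord_recr /= eqxx.
have -> : \sum_(i < m.+1) (if (i : nat) == m.+1 then c m.+2 else d' i) * fr (s * i) (fr s x - b * x) =
     \sum_(i < m.+1) d' i * fr (s * i) (fr s x - b * x).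
  by apply: eq_bigr => i _; rewrite ltn_eqF.
ring.
Qed.


Lemma divout m c u : u != 0 -> spol c m.+1 u = 0 -> exists d : nat -> L,
  [/\ d m = c m.+1, c 0%N = - (fr s u / u) * d 0%N &
      (kd (spol c m.+1) <= kd (spol d m) + 1)%N].
Proof.
move=> u0 hu; set b := fr s u / u.
have [d [r [e1 [e2 e3]]]] := div1 b m c.
have hb : fr s u - b * u = 0 by rewrite /b divfK // subrr.
have r0 : r = 0.
  by move: hu; rewrite e1 hb spol0 add0r => /eqP; rewrite mulf_eq0 (negbTE u0) orbF => /eqP.
exists d; split=> //; first by rewrite e3 r0 sub0r mulNr.
apply: leq_trans (@kd_comp _ _ (spol d m) (fun x => fr s x - b * x) (spol c m.+1) (spol_lin _ _) (hlin b) (spol_lin _ _) _) _.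
  by move=> x; rewrite /= e1 r0 mul0r addr0.
rewrite leq_add2l.
have fu0 : fr s u != 0 by rewrite fr_eq0.
rewrite /kd; apply: (@leq_trans (\dim <[u]>)); last by rewrite dim_vline leq_b1.
apply: dimvS; apply/subvP => x.
rewrite mklin_ker; last exact: hlin.
rewrite subr_eq0 => /eqP hx.
have : fr s (x / u) = x / u.
  rewrite frM frV hx /b; field; rewrite fu0 u0 //.
case/fix_sig => a ha.
have -> : x = a *: u by rewrite -mulr_algl -ha divfK.
by rewrite memvZ // memv_line.
Qed.

Lemma kerbound m c : c m != 0 -> (kd (spol c m) <= m)%N.
Proof.
elim: m c => [|m IH] c cm.
  rewrite /kd; suff -> : lker (linfun (spol c 0)) = 0%VS by rewrite dimv0.
  apply/vspaceP => x; rewrite mklin_ker; last exact: spol_lin.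
  rewrite memv0 /spol big_ord1 /=.
  by rewrite muln0 fr0 mulf_eq0 (negbTE cm).
case: (eqVneq (lker (linfun (spol c m.+1))) 0%VS) => [e|nz].
  by rewrite /kd e dimv0.
set u := vpick (lker (linfun (spol c m.+1))).
have u0 : u != 0 by rewrite vpick0.
have hu : spol c m.+1 u = 0.
  by apply/eqP; rewrite -mklin_ker ?memv_pick //; exact: spol_lin.
have [d [e1 e2 e3]] := divout u0 hu.
apply: leq_trans e3 _; rewrite addn1 ltnS; apply: IH; rewrite e1 //.
Qed.


Lemma normE (x : L) : normL n x = \prod_(i < n) fr i x.
Proof. by []. Qed.

Lemma normM (x y : L) : normL n (x * y) = normL n x * normL n y.
Proof. by rewrite !normE -big_split; apply: eq_bigr => i _; rewrite frM. Qed.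

Lemma norm_fr1 (x : L) : normL n (fr 1 x) = normL n x.
Proof.
rewrite !normE; case: n n1 hn => // n' _ hn'.
rewrite [LHS]big_ord_recr [RHS]big_ord_recl /= fr0 mulrC.
rewrite -frD addn1 (fr_period hn' x); congr (_ * _).
by apply: eq_bigr => i _; rewrite -frD addn1.
Qed.

Lemma norm_fr t (x : L) : normL n (fr t x) = normL n x.
Proof. elim: t => [|t IH]; first by rewrite fr0. by rewrite frS norm_fr1 IH. Qed.

Lemma normN1 : normL n (-1 : L) = (-1) ^+ n.
Proof.
rewrite normE (eq_bigr (fun _ : 'I_n => -1 : L)) ?prodr_const ?card_ord // => i _.
by rewrite frN fr1.
Qed.

Lemma norm_neq0 (x : L) : x != 0 -> normL n x != 0.
Proof. by move=> x0; rewrite normE; apply/prodf_neq0 => i _; rewrite fr_eq0. Qed.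

Lemma normlemma m c : c m != 0 -> kd (spol c m) = m ->
  normL n (c 0%N) = (-1) ^+ (m * n) * normL n (c m).
Proof.
elim: m c => [|m IH] c cm hk; first by rewrite mul0n expr0 mul1r.
case: (eqVneq (lker (linfun (spol c m.+1))) 0%VS) => [e|nz].
  by move: hk; rewrite /kd e dimv0.
set u := vpick (lker (linfun (spol c m.+1))).
have u0 : u != 0 by rewrite vpick0.
have hu : spol c m.+1 u = 0.
  by apply/eqP; rewrite -mklin_ker ?memv_pick //; exact: spol_lin.
have [d [e1 e2 e3]] := divout u0 hu.
have dm : d m != 0 by rewrite e1.
have kdd : kd (spol d m) = m.
  apply/eqP; rewrite eqn_leq kerbound //=.
  by move: e3; rewrite hk addn1 ltnS.
rewrite e2 -e1 mulNr -[-(_ * _)]mulN1r !normM normN1 (IH d dm kdd).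
have -> : normL n (fr s u) * normL n u^-1 = 1.
  by rewrite norm_fr -normM mulfV // normE big1 // => i _; rewrite fr1.
by rewrite mul1r mulrA -exprD mulSn.
Qed.

End SPol.

Section Eval.
Variables (F : finFieldType) (L : fieldExtType F) (n : nat).
Hypothesis hn : \dim {:L} = n.
Hypothesis n0 : (0 < n)%N.
Local Notation fr := (@fr F L).
Local Notation lpeval := (@lpeval F L n).

Lemma lpevalE (a : 'rV[L]_n) x : lpeval a x = \sum_(i < n) a 0 i * fr i x.
Proof. by []. Qed.

Lemma lpeval_lin a : flin (lpeval a).
Proof.
split=> [x y|c x]; rewrite !lpevalE.
  by rewrite -big_split; apply: eq_bigr => i _; rewrite frA mulrDr.
by rewrite scaler_sumr; apply: eq_bigr => i _; rewrite frZ scalerAr.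
Qed.

Lemma lpevalD a b x : lpeval (a + b) x = lpeval a x + lpeval b x.
Proof. by rewrite !lpevalE -big_split; apply: eq_bigr => i _; rewrite mxE mulrDl. Qed.

Lemma lpevalZ (c : L) a x : lpeval (c *: a) x = c * lpeval a x.
Proof. by rewrite !lpevalE mulr_sumr; apply: eq_bigr => i _; rewrite mxE mulrA. Qed.

Lemma lpeval0 x : lpeval 0 x = 0.
Proof. by rewrite lpevalE big1 // => i _; rewrite mxE mul0r. Qed.

Lemma lpeval_sum I (r : seq I) (P : pred I) (G : I -> 'rV[L]_n) x :
  lpeval (\sum_(i <- r | P i) G i) x = \sum_(i <- r | P i) lpeval (G i) x.
Proof. by elim/big_rec2: _ => [|i a b _ <-]; rewrite ?lpeval0 ?lpevalD. Qed.

Lemma lpeval_frob j a x : lpeval (lpfrob j a) x = fr j (lpeval a x).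
Proof.
rewrite !lpevalE frsum.
under eq_bigr do rewrite mxE big_distrl /=.
rewrite (exchange_big_dep xpredT) //=.
apply: eq_bigr => i _.
rewrite (bigD1 (Ordinal (ltn_pmod (i + j) n0))) /=; last by rewrite eqxx.
rewrite big1 ?addr0; last first.
  move=> m /andP [/eqP e ne]; exfalso; move/negP: ne; apply; apply/eqP/val_inj.
  by rewrite /= e.
rewrite frM -frD (fr_mod hn (j + i)) addnC /fr //.
Qed.

Lemma lpeval_lpx x : lpeval ((lpx L n : 'rV[L]_n)) x = x.
Proof.
rewrite lpevalE (bigD1 (Ordinal n0)) //= big1 ?addr0.
  by rewrite mxE eqxx mul1r fr0.
by move=> i /eqP hi; rewrite mxE; case: eqP => [e|_]; [case: hi; apply: val_inj | rewrite mul0r].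
Qed.

Lemma lpeval_lpX j x : lpeval ((lpX L n j : 'rV[L]_n)) x = fr j x.
Proof. by rewrite /lpX lpeval_frob lpeval_lpx. Qed.

End Eval.

Lemma topidx (R : nzRingType) (l : nat -> R) m : (exists i, (i < m)%N /\ l i != 0) ->
  exists j, [/\ (j < m)%N, l j != 0 & forall i, (j < i < m)%N -> l i = 0].
Proof.
elim: m => [[i [] //]|m IH [i [hi li]]].
case: (eqVneq (l m) 0) => [lm|lm]; last first.
  by exists m; split=> // i2 /andP [h1 h2]; move: (leq_trans h2 h1); rewrite ltnn.
have [|j [hj lj hz]] := IH.
  exists i; split=> //; rewrite ltn_neqAle -ltnS hi andbT.
  by apply/eqP => e; move: li; rewrite e lm eqxx.
exists j; split=> //; first exact: ltnW.
move=> i' /andP [h1 h2]; rewrite ltnS leq_eqVlt in h2.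
case/orP: h2 => [/eqP [->] //|h2]; by apply: hz; rewrite h1.
Qed.

Section Gen.
Variables (F : finFieldType) (L : fieldExtType F) (n : nat).
Hypothesis hn : \dim {:L} = n.
Hypothesis n1 : (1 < n)%N.
Local Notation fr := (@fr F L).
Local Notation lpeval := (@lpeval F L n).

Lemma spol_trunc s (c : nat -> L) m j : (forall i, (j < i <= m)%N -> c i = 0) -> (j <= m)%N ->
  spol s c m =1 spol s c j.
Proof.
move=> hz hj x; rewrite /spol.
rewrite -(subnKC hj) -addSn big_split_ord /= [X in _ + X]big1 ?addr0 //.
move=> i _; rewrite hz ?mul0r //.
have := ltn_ord i; have := subnKC hj; lia.
Qed.

Lemma kd_full (G : L -> L) : flin G -> (forall x, G x = 0) -> kd G = n.
Proof.
move=> lG h; rewrite /kd -hn; congr (\dim _); apply/vspaceP => x.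
by rewrite mklin_ker // h eqxx memvf.
Qed.

Lemma lpeval_inj (a : 'rV[L]_n) : (forall x, lpeval a x = 0) -> a = 0.
Proof.
move=> h; apply/eqP; apply/negPn/negP => a0.
have n0 : (0 < n)%N by apply: ltnW.
pose i0 := Ordinal n0.
pose c i := if (i < n)%N then a 0 (insubd i0 i) else 0.
have e : forall x, lpeval a x = spol 1 c n.-1 x.
  move=> x; rewrite lpevalE /spol prednK //; apply: eq_bigr => i _.
  by rewrite /c ltn_ord valKd mul1n.
have [i [hi ci]] : exists i, (i < n)%N /\ c i != 0.
  have [j hj] : exists j, a 0 j != 0.
    apply/existsP; apply: contraR a0 => /existsPn hz; apply/eqP/rowP => j.
    by rewrite mxE; move/negPn/eqP: (hz j).
  by exists j; split=> //; rewrite /c ltn_ord valKd.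
have [j [hj cj hz]] := topidx (ex_intro _ i (conj hi ci)).
have co1 : coprime 1 n by rewrite /coprime gcd1n.
have := kerbound hn n1 co1 cj.
have e2 := @spol_trunc 1 c n.-1 j.
have kf : kd (spol 1 c j) = n.
  apply: kd_full; first exact: spol_lin.
  move=> x; rewrite -e2 ?(h x) -?e //; last by rewrite -ltnS prednK.
  move=> i1 /andP [h1 h2]; apply: hz; rewrite h1 /=.
  by rewrite -ltnS prednK in h2.
by rewrite kf leqNgt hj.
Qed.

End Gen.

Section Inv.
Variables (F : finFieldType) (L : fieldExtType F) (n : nat).
Hypothesis hn : \dim {:L} = n.
Hypothesis n1 : (1 < n)%N.
Local Notation fr := (@fr F L).
Local Notation lpeval := (@lpeval F L n).

Lemma lp_inverse (p : 'rV[L]_n) : bijective (lpeval p) ->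
  exists g : 'rV[L]_n, cancel (lpeval p) (lpeval g) /\ cancel (lpeval g) (lpeval p).
Proof.
case=> pinv hp1 hp2.
have n0 : (0 < n)%N by apply: ltnW.
pose Pm := \matrix_(i < n, m < n) (lpfrob i p) 0 m.
have eP : forall a x, lpeval (a *m Pm) x = lpeval a (lpeval p x).
  move=> a x; rewrite mulmx_sum_row lpeval_sum lpevalE; apply: eq_bigr => i _.
  rewrite lpevalZ; congr (_ * _).
  have -> : row i Pm = lpfrob i p by apply/rowP => m; rewrite !mxE.
  by rewrite (lpeval_frob hn n0).
have uP : Pm \in unitmx.
  rewrite -row_free_unit; apply: inj_row_free => v hv.
  apply: (lpeval_inj hn n1) => y.
  by rewrite -[y]hp2 -eP hv lpeval0.
pose g := lpx L n *m invmx Pm.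
have hg : forall x, lpeval g (lpeval p x) = x.
  by move=> x; rewrite -eP /g mulmxKV // (lpeval_lpx n0).
exists g; split=> // y.
by rewrite -[y]hp2 hg.
Qed.

End Inv.

Section Core.
Variables (F : finFieldType) (L : fieldExtType F) (n : nat).
Hypothesis hn : \dim {:L} = n.
Hypothesis n1 : (1 < n)%N.
Variable s : nat.
Hypothesis hs : coprime s n.
Variable k : nat.
Hypothesis hk : (2 < k)%N.
Variable eta : L.
Hypothesis heta : eta != 0.
Hypothesis hnorm : normL n eta != (-1) ^+ (k * n).
Local Notation fr := (@fr F L).
Local Notation lpeval := (@lpeval F L n).

Definition cf (l : nat -> L) (j : nat) : L := if j == k then eta * l 0%N else l j.

Lemma core (l : nat -> L) : (exists i, (i < k)%N /\ l i != 0) ->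
  (kd (spol s (cf l) k) <= k.-1)%N.
Proof.
move=> ex; have k0 : (0 != k)%N by case: k hk.
case: (eqVneq (l 0%N) 0) => l0.
  have [j [hj lj hz]] := topidx ex.
  have cfj : cf l j = l j by rewrite /cf ltn_eqF.
  rewrite (@kd_ext _ _ _ (spol s (cf l) j)); try exact: spol_lin; last first.
    apply: (spol_trunc hn n1); last exact: ltnW.
    move=> i /andP [h1 h2]; rewrite /cf; case: eqP => [_|ne]; first by rewrite l0 mulr0.
    by apply: hz; rewrite h1 ltn_neqAle h2 andbT; apply/eqP.
  apply: leq_trans (kerbound hn n1 hs _) _; first by rewrite cfj.
  by rewrite -ltnS prednK // ltnW // ltnW.
have ck : cf l k != 0 by rewrite /cf eqxx mulf_neq0.
have := kerbound hn n1 hs ck; rewrite leq_eqVlt => /orP [/eqP e|]; last first.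
  move=> hlt; rewrite -ltnS prednK //; by case: (k) hk.
exfalso; move/negP: hnorm; apply.
have := normlemma hn n1 hs ck e.
rewrite /cf eqxx (negbTE k0) normM => h.
have N0 := @norm_neq0 _ _ n _ l0.
have h1 : 1 = (-1) ^+ (k * n) * normL n eta.
  by apply: (mulIf N0); rewrite mul1r {1}h mulrA.
have XX : (-1) ^+ (k * n) * (-1) ^+ (k * n) = 1 :> L by rewrite -exprMn mulrNN mulr1 expr1n.
apply/eqP; rewrite -[LHS]mul1r -{1}XX -mulrA -h1 mulr1 //.
Qed.

End Core.

Lemma ordfun (R : Type) (r0 : R) m (lam : 'I_m -> R) : exists l : nat -> R, forall i : 'I_m, lam i = l i.
Proof.
case: m lam => [|m] lam; first by exists (fun _ => r0); case.
by exists (fun j => lam (inord j)) => i; rewrite inord_val.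
Qed.

Section Code.
Variables (F : finFieldType) (L : fieldExtType F) (n : nat).
Hypothesis hn : \dim {:L} = n.
Hypothesis n1 : (1 < n)%N.
Variable s : nat.
Hypothesis hs : coprime s n.
Variable k : nat.
Hypothesis hk : (2 < k)%N.
Hypothesis hkn : (k <= n)%N.
Variable eta : L.
Hypothesis heta : eta != 0.
Hypothesis hnorm : normL n eta != (-1) ^+ (k * n).
Variable p : 'rV[L]_n.
Hypothesis hp : bijective (lpeval p).
Local Notation fr := (@fr F L).
Local Notation lpeval := (@lpeval F L n).

Let n0 : (0 < n)%N. Proof. exact: ltnW. Qed.
Let k0 : (0 < k)%N. Proof. by case: k hk. Qed.

Definition Bs : seq 'rV[L]_n :=
  (p + eta *: lpfrob (s * k) p) :: [seq lpfrob (s * i) p | i <- iota 1 k.-1].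
Definition Hs : seq 'rV[L]_n :=
  (lpx L n + eta *: lpX L n (s * k)) :: [seq lpX L n (s * i) | i <- iota 1 k.-1].

Lemma size_Bs : size Bs = k.
Proof. by rewrite /= size_map size_iota prednK. Qed.
Lemma size_Hs : size Hs = k.
Proof. by rewrite /= size_map size_iota prednK. Qed.

Lemma Hs_val i y : lpeval (Hs`_i) y =
  if i == 0%N then y + eta * fr (s * k) y else if (i < k)%N then fr (s * i) y else 0.
Proof.
case: i => [|i] /=.
  by rewrite lpevalD lpevalZ (lpeval_lpx n0) (lpeval_lpX hn n0).
case: (ltnP i k.-1) => hi.
  rewrite (nth_map 0%N) ?size_iota // nth_iota // (lpeval_lpX hn n0).
  by rewrite add1n ifT //; have := hi; lia.
rewrite nth_default ?size_map ?size_iota // lpeval0.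
rewrite ifF //; apply/negbTE; have := hi; lia.
Qed.

Lemma BHs i x : lpeval (Bs`_i) x = lpeval (Hs`_i) (lpeval p x).
Proof.
rewrite Hs_val; case: i => [|i] /=.
  by rewrite lpevalD lpevalZ (lpeval_frob hn n0).
case: (ltnP i k.-1) => hi.
  rewrite (nth_map 0%N) ?size_iota // nth_iota // (lpeval_frob hn n0).
  by rewrite add1n ifT //; have := hi; lia.
rewrite nth_default ?size_map ?size_iota // lpeval0.
rewrite ifF //; apply/negbTE; have := hi; lia.
Qed.

Lemma sumcorr (l : nat -> L) x :
  lpeval (\sum_(i < k) l i *: Bs`_i) x = lpeval (\sum_(i < k) l i *: Hs`_i) (lpeval p x).
Proof.
rewrite !lpeval_sum; apply: eq_bigr => i _; by rewrite !lpevalZ BHs.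
Qed.

Lemma Hsum_spol (l : nat -> L) y :
  lpeval (\sum_(i < k) l i *: Hs`_i) y = spol s (cf k eta l) k y.
Proof.
rewrite lpeval_sum /spol big_ord_recr /= /cf eqxx.
rewrite -(big_mkord xpredT (fun i => lpeval (l i *: Hs`_i) y)).
rewrite -(big_mkord xpredT (fun i => (if i == k then eta * l 0%N else l i) * fr (s * i) y)).
rewrite [LHS](big_ltn k0) [X in _ = X + _](big_ltn k0).
rewrite lpevalZ Hs_val eqxx muln0 fr0 eq_sym (negbTE (lt0n_neq0 k0)).
have -> : \sum_(1 <= i < k) lpeval (l i *: Hs`_i) y =
   \sum_(1 <= i < k) (if i == k then eta * l 0%N else l i) * fr (s * i) y.
  apply: eq_big_nat => i /andP [h1 h2].
  have ne0 : (i == 0%N) = false by case: i h1 {h2}.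
  have nek : (i == k) = false by apply/negbTE; rewrite neq_ltn h2.
  by rewrite lpevalZ Hs_val ne0 nek h2.
by ring.
Qed.


Lemma psurj y : exists x, y = lpeval p x.
Proof. by case: hp => pinv h1 h2; exists (pinv y); rewrite h2. Qed.

Lemma rank_eq (f : 'rV[L]_n) (G : L -> L) : flin G ->
  (forall x, lpeval f x = G (lpeval p x)) -> lprank f = (n - kd G)%N.
Proof.
move=> lG e; rewrite /lprank.
have -> : limg (linfun (lpeval f)) = limg (linfun G).
  apply/vspaceP => y; apply/memv_imgP/memv_imgP => [[x _ ->]|[z _ ->]].
    by exists (lpeval p x); rewrite ?memvf // !mklinE ?e //; exact: lpeval_lin.
  have [x ->] := psurj z.
  by exists x; rewrite ?memvf // !mklinE ?e //; exact: lpeval_lin.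
have := limg_ker_dim (linfun G) fullv.
by rewrite capfv hn /kd => <-; rewrite addKn.
Qed.

Lemma Bs_zero (l : nat -> L) : \sum_(i < k) l i *: Bs`_i = 0 ->
  forall i, (i < k)%N -> l i = 0.
Proof.
move=> hz i hi; apply/eqP; apply/negPn/negP => li.
have := core hn n1 hs hk heta hnorm (ex_intro _ i (conj hi li)).
rewrite (@kd_full _ _ n hn); first by rewrite leqNgt (leq_trans _ hkn) // prednK.
  exact: spol_lin.
move=> y; have [x ->] := psurj y.
by rewrite -Hsum_spol -sumcorr hz lpeval0.
Qed.

Lemma free_Bs : free Bs.
Proof.
apply/(@freeP _ _ _ (in_tuple Bs)) => lam hlam i.
have [l el] := ordfun 0 lam.
rewrite el; apply: Bs_zero; last by rewrite -size_Bs.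
move: hlam; under eq_bigr do rewrite el in_tupleE.
by rewrite size_Bs.
Qed.

Lemma span_nat (X : seq 'rV[L]_n) v : v \in <<X>>%VS ->
  exists l : nat -> L, v = \sum_(i < size X) l i *: X`_i.
Proof.
move=> hv; have := @coord_span _ _ _ (in_tuple X) v hv.
have [l el] := ordfun 0 (fun i => coord (in_tuple X) i v).
by move=> ->; exists l; apply: eq_bigr => i _; rewrite el.
Qed.

Lemma lower_bound f : f \in <<Bs>>%VS -> f != 0 -> (n - k.-1 <= lprank f)%N.
Proof.
move=> /span_nat [l]; rewrite size_Bs => -> f0.
rewrite (@rank_eq _ (spol s (cf k eta l) k)); last first.
- by move=> x; rewrite sumcorr Hsum_spol.
- exact: spol_lin.
rewrite leq_sub2l //; apply: (core hn n1 hs hk heta hnorm).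
case: (boolP [exists i : 'I_k, l i != 0]) => [/existsP [i hi]|/existsPn hz].
  by exists i.
exfalso; move/eqP: f0; apply; apply: big1 => i _.
by move/negPn/eqP: (hz i) => ->; rewrite scale0r.
Qed.


Lemma Bs_mem (l : nat -> L) : \sum_(i < k) l i *: Bs`_i \in <<Bs>>%VS.
Proof.
apply: memv_suml => i _; apply: memvZ; apply: memv_span; apply: mem_nth.
by rewrite size_Bs.
Qed.

Lemma exists_small : exists f, [/\ f \in <<Bs>>%VS, f != 0 & (lprank f <= n - k.-1)%N].
Proof.
set wb := vbasis (fullv : {vspace L}).
pose W := take k.-1 wb.
have km : (k.-1 <= n)%N by apply: leq_trans (leq_pred k) hkn.
have sW : size W = k.-1 by rewrite /W size_takel // size_tuple hn.
have fW : free W.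
  apply: (@catl_free _ _ (drop k.-1 wb)); rewrite cat_take_drop.
  exact: basis_free (vbasisP fullv).
pose M : 'M[L]_(k, k.-1) := \matrix_(i < k, j < k.-1) lpeval (Hs`_i) (W`_j).
have nrf : ~~ row_free M.
  apply/negP => /eqP hr; have := rank_leq_col M; rewrite hr.
  by case: (k) k0 => // k1 _ /=; rewrite ltnn.
have kn0 : kermx M != 0 by rewrite kermx_eq0.
have [i0 hi0] : exists i0, row i0 (kermx M) != 0.
  case: (pickP (fun i => row i (kermx M) != 0)) => [i0 hi0|hnone]; first by exists i0.
  exfalso; move/negP: kn0; apply; apply/eqP/row_matrixP => i; rewrite row0.
  by apply/eqP; move/negbT: (hnone i); rewrite negbK.
set v := row i0 (kermx M).
have hv : v *m M = 0 by rewrite /v -row_mul mulmx_ker row0.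
have [l el] := ordfun 0 (fun i : 'I_k => v 0 i).
exists (\sum_(i < k) l i *: Bs`_i); split; first exact: Bs_mem.
  apply/negP => /eqP hz; move/negP: hi0; apply; apply/eqP/rowP => j.
  have := el j; rewrite /v !mxE => ->; by rewrite (Bs_zero hz) ?ltn_ord.
rewrite (@rank_eq _ (spol s (cf k eta l) k)); last first.
- by move=> x; rewrite sumcorr Hsum_spol.
- exact: spol_lin.
apply: leq_sub2l; rewrite -sW -(eqP fW) /kd; apply: dimvS; apply/span_subvP => w.
case/(nthP 0) => j hj <-.
rewrite mklin_ker; last exact: spol_lin.
rewrite -Hsum_spol lpeval_sum.
have := congr1 (fun A : 'rV[L]_(k.-1) => A 0 (Ordinal (leq_trans hj (eq_leq sW)))) hv.
rewrite !mxE /= => e; apply/eqP; apply: (etrans _ e); apply: eq_bigr => i _.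
by rewrite lpevalZ el mxE.
Qed.


Lemma Hs_mem (l : nat -> L) : \sum_(i < k) l i *: Hs`_i \in <<Hs>>%VS.
Proof.
apply: memv_suml => i _; apply: memvZ; apply: memv_span; apply: mem_nth.
by rewrite size_Hs.
Qed.


Lemma main_result (C : {vspace 'rV[L]_n}) : \dim C = k -> {subset Bs <= C} ->
  MRD C /\ code_equiv C (Hcode n k s eta).
Proof.
move=> hdim sBC.
have eCB : <<Bs>>%VS = C.
  apply/eqP; rewrite eqEdim (introT span_subvP sBC) /= hdim.
  by rewrite (eqP free_Bs) size_Bs.
have km : (k.-1 <= n)%N by apply: leq_trans (leq_pred k) hkn.
split.
  exists (n - k.-1)%N; split; last first.
    by rewrite hdim subKn // addn1 prednK // -expnM.
  split.
    have [f [hf f0 hr]] := exists_small.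
    exists f, 0; split=> //; first by rewrite -eCB.
      exact: mem0v.
    rewrite subr0; apply/eqP; rewrite eqn_leq hr /=.
    exact: lower_bound.
  move=> f g hf hg hfg; apply: lower_bound; first by rewrite eCB memvB.
  by rewrite subr_eq0.
have [g [hg1 hg2]] := lp_inverse hn n1 hp.
exists (lpx L n), g, idfun; split.
- by exists id => x; rewrite (lpeval_lpx n0).
- by exists (lpeval p).
- by exists idfun.
- move=> f; rewrite -eCB => /span_nat [l]; rewrite size_Bs => ->.
  exists (\sum_(i < k) l i *: Hs`_i); first exact: Hs_mem.
  move=> y /=; rewrite (lpeval_lpx n0).
  have -> : map_mx idfun (\sum_(i < k) l i *: Bs`_i) = \sum_(i < k) l i *: Bs`_i.
    by apply/matrixP => i j; rewrite mxE.
  by rewrite sumcorr hg2.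
- move=> f' hf'; have /span_nat [l] : f' \in <<Hs>>%VS by [].
  rewrite size_Hs => ef'.
  exists (\sum_(i < k) l i *: Bs`_i); first by rewrite -eCB; exact: Bs_mem.
  move=> y /=; rewrite (lpeval_lpx n0) ef'.
  have -> : map_mx idfun (\sum_(i < k) l i *: Bs`_i) = \sum_(i < k) l i *: Bs`_i.
    by apply/matrixP => i j; rewrite mxE.
  by rewrite sumcorr hg2.
Qed.

End Code.

Theorem theorem3p10 (F : finFieldType) (L : fieldExtType F) (n : nat)
  (hn : \dim {:L} = n)
  (C : {vspace 'rV[L]_n}) (k : nat) (hk : (2 < k)%N) (hdim : \dim C = k)
  (hU1 : meets_U1_trivially C)
  (s : nat) (hs : coprime s n)
  (h1a : \dim (C :&: codefrob (s) C) = (k - 2)%N)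
  (h1b : \dim (C :&: codefrob s C :&: codefrob (2 * s) C) = (k - 3)%N)
  (p qx : 'rV[L]_n) (hq : qx \in C)
  (hC : C = (<<[seq lpfrob (s * i) p | i <- iota 1 k.-1]>> + <[qx]>)%VS)
  (hdirect : directv (<<[seq lpfrob (s * i) p | i <- iota 1 k.-1]>> + <[qx]>)%VS)
  (hp : lp_invertible p)
  (eta : L) (heta : eta != 0)
  (hpeta : p + eta *: lpfrob (s * k) p \in C)
  (hnorm : normL n eta != (-1) ^+ (k * n)) :
  MRD C /\ code_equiv C (Hcode n k s eta).
Proof.
have hkn : (k <= n)%N.
  rewrite -hdim; have := dimvS (subvf C); rewrite dimvf dim_matrix; lia.
have n1 : (1 < n)%N by apply: leq_trans hkn; apply: leq_trans hk.
apply: (@main_result F L n hn n1 s hs k hk hkn eta heta hnorm p hp C hdim).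
move=> y; rewrite inE => /predU1P [->|/mapP [i hi ->]] //.
rewrite hC; apply: (subvP (addvSl _ _)); apply: memv_span.
by apply: map_f.
Qed.
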